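(* Let $X$ and $Y$ be random variables with $X\ge0$ and $Y\ge1$. Then for every $p>1$, $$\mathbb{E}\,X\log Y\le(\mathbb{E}X^p)^{1/p}\left(\log\mathbb{E}Y+\frac{1}{p-1}\right).$$
   Context: $\log$ denotes the natural logarithm. *)

(* Defs.v *)
From HB Require Import structures.
From mathcomp Require Import all_boot all_order all_algebra.
From mathcomp Require Import all_classical all_reals all_analysis.

(* Main.v *)
Require Import Defs.
From HB Require Import structures.
From mathcomp Require Import all_boot all_order all_algebra.
From mathcomp Require Import all_classical all_reals all_analysis.
Import Order.TTheory GRing.Theory Num.Theory.
Local Open Scope ring_scope.
Local Open Scope ereal_scope.
From mathcomp Require Import ring lra.
Import numFieldTopology.Exports numFieldNormedType.Exports.

Section K.
Local Open Scope classical_set_scope.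
Local Open Scope ring_scope.
Variable R : realType.

Lemma powR_expE (x a : R) : 0 < x -> x `^ a = expR (a * ln x).
Proof. by move=> x0; rewrite /powR gt_eqF. Qed.

Lemma ln_le_sub1 (x : R) : 0 < x -> ln x <= x - 1.
Proof. move=> x0; have := @le_ln1Dx R (x - 1). have -> : 1 + (x - 1) = x by ring. by apply; lra. Qed.

Lemma deriv_f (D q x : R) : 0 < x ->
  is_derive x 1 (fun y : R => D * expR y - y `^ q) (D * expR x - q * x `^ (q - 1)).
Proof. by move=> x0; apply: is_deriveB; exact: is_derive1_powR. Qed.

Lemma cont_f (D q a b : R) : 0 < a ->
  {within `[a, b], continuous (fun y : R => D * expR y - y `^ q)}.
Proof.
move=> a0; apply/continuous_in_subspaceT => x /[!inE] /= /[!in_itv] /= /andP[ax _].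
apply/differentiable_continuous/derivable1_diffP.
have := @deriv_f D q x (lt_le_trans a0 ax). by case.
Qed.

Lemma key (q L v : R) : 1 < q -> q - 1 <= L -> q - 1 <= v ->
  v `^ q <= L `^ q + q * L `^ (q - 1) * (expR (v - L) - 1).
Proof.
move=> q1 kL kv.
have k0 : 0 < q - 1 by lra.
have L0 : 0 < L by lra.
have v0 : 0 < v by lra.
set k := q - 1 in k0 kL kv *.
pose D := q * L `^ k * expR (- L).
pose f := fun y : R => D * expR y - y `^ q.
have fE y : f y = q * L `^ k * expR (y - L) - y `^ q.
  by rewrite /f /D expRD -mulrA [expR (- L) * _]mulrC.
suff : f L <= f v.
  by rewrite !fE subrr expR0 mulr1; lra.
have dfE c : 0 < c -> D * expR c - q * c `^ k = q * (L `^ k * expR (c - L) - c `^ k).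
  by move=> _; rewrite /D expRD; ring.
have [vL|Lv|<-] := ltgtP v L; last by [].
- have hd : forall x, x \in `]v, L[ -> is_derive x 1 f (D * expR x - q * x `^ k).
    move=> x /[!in_itv] /= /andP[vx _]; by apply: deriv_f; lra.
  have [c /[!in_itv] /= /andP[vc cL] H] := MVT vL hd (cont_f D q v L v0).
  rewrite dfE in H; last by lra.
  have : c `^ k >= L `^ k * expR (c - L).
    rewrite !powR_expE; try lra.
    rewrite -expRD ler_expR.
    have : ln L - ln c <= (L - c) / k.
      rewrite -ln_div; try (rewrite posrE; lra).
      have c0 : 0 < c by lra.
      have h := @ln_le_sub1 (L / c) (divr_gt0 L0 c0).
      have h2 : L / c - 1 <= (L - c) / k.
        have -> : L / c - 1 = (L - c) / c by field; lra.
        rewrite ler_pdivrMr // mulrAC ler_pdivlMr //.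
        have : 0 <= L - c by lra.
        move=> h3; rewrite ler_wpM2l //. lra.
      exact: le_trans h h2.
    rewrite ler_pdivlMr // => h.
    nra.
  move=> hc.
  have : f L - f v <= 0.
    rewrite H; apply: mulr_le0_ge0; last by lra.
    apply: mulr_ge0_le0; lra.
  lra.
- have hd : forall x, x \in `]L, v[ -> is_derive x 1 f (D * expR x - q * x `^ k).
    move=> x /[!in_itv] /= /andP[vx _]; by apply: deriv_f; lra.
  have [c /[!in_itv] /= /andP[Lc cv] H] := MVT Lv hd (cont_f D q L v L0).
  rewrite dfE in H; last by lra.
  have : c `^ k <= L `^ k * expR (c - L).
    rewrite !powR_expE; try lra.
    rewrite -expRD ler_expR.
    have : ln c - ln L <= (c - L) / k.
      rewrite -ln_div; try (rewrite posrE; lra).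
      have h := @ln_le_sub1 (c / L) (divr_gt0 (lt_trans L0 Lc) L0).
      have h2 : c / L - 1 <= (c - L) / k.
        have -> : c / L - 1 = (c - L) / L by field; lra.
        rewrite ler_pdivrMr // mulrAC ler_pdivlMr //.
        have : 0 <= c - L by lra.
        move=> h3; rewrite ler_wpM2l //.
      exact: le_trans h h2.
    rewrite ler_pdivlMr // => h.
    nra.
  move=> hc.
  have : 0 <= f v - f L.
    rewrite H; apply: mulr_ge0; last by lra.
    apply: mulr_ge0; lra.
  lra.
Qed.
Lemma pointwise (q r y : R) : 1 < q -> 1 <= r -> 1 <= y ->
  `|ln y| `^ q + q * (ln r + (q - 1)) `^ (q - 1) <=
  (ln r + (q - 1)) `^ q + (q * (ln r + (q - 1)) `^ (q - 1) / r) * y.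
Proof.
move=> q1 r1 y1.
have r0 : 0 < r by lra.
have y0 : 0 < y by lra.
have lr := ln_ge0 r1; have ly := ln_ge0 y1.
have h := @key q (ln r + (q - 1)) (ln y + (q - 1)) q1 ltac:(lra) ltac:(lra).
have E : ln y + (q - 1) - (ln r + (q - 1)) = ln (y / r).
  by rewrite ln_div ?posrE //; ring.
move: h; rewrite E lnK ?posrE ?divr_gt0 // => h.
have h2 : `|ln y| `^ q <= (ln y + (q - 1)) `^ q.
  rewrite ger0_norm //; apply: ge0_ler_powR; rewrite ?nnegrE; lra.
set C := q * (ln r + (q - 1)) `^ (q - 1) in h *.
have -> : C / r * y = C * (y / r) by rewrite mulrAC mulrA.
lra.
Qed.

End K.


(* Expectations are Lebesgue integrals in the extended reals \bar R (possibly +oo);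
   lne is the extended-real natural logarithm (lne +oo = +oo), poweR the extended power. *)
Theorem lemma1 (d : measure_display) (T : measurableType d) (R : realType)
  (P : probability T R) (X Y : {RV P >-> R})
  (hX : forall w, (0 <= X w)%R) (hY : forall w, (1 <= Y w)%R)
  (p : R) (hp : (1 < p)%R) :
  'E_P[fun w => (X w * ln (Y w))%R]
    <= ('E_P[fun w => (X w `^ p)%R]) `^ p^-1 * (lne 'E_P[Y] + ((p - 1)^-1)%:E).
Proof.
pose q : R := (p / (p - 1))%R.
have p10 : (0 < p - 1)%R by lra.
have p0 : (0 < p)%R by lra.
have qk : (q - 1 = (p - 1)^-1)%R by rewrite /q; field; lra.
have q1 : (1 < q)%R.
  have : (0 < (p - 1)^-1)%R by rewrite invr_gt0.
  lra.
have q0 : (0 < q)%R by lra.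
have pq : (p^-1 + q^-1 = 1)%R by rewrite /q invf_div; field; lra.
have mX : measurable_fun [set: T] (X : T -> R) := measurable_funPT X.
have mY : measurable_fun [set: T] (Y : T -> R) := measurable_funPT Y.
have mlnY : measurable_fun [set: T] (fun w => ln (Y w)).
  exact: measurableT_comp (@measurable_realfun.measurable_ln R) mY.
have H := hoelder P mX mlnY p0 q0 pq.
have E1 : 'E_P[fun w => (X w * ln (Y w))%R] = 'N[P]_1[EFin \o (X \* (fun w => ln (Y w)))%R].
  rewrite Lnorm1 unlock; apply: eq_integral => w _ /=.
  by rewrite ger0_norm // mulr_ge0 // ln_ge0.
have E2 : 'N[P]_p%:E[EFin \o X] = 'E_P[fun w => (X w `^ p)%R] `^ p^-1.
  rewrite unlock [in RHS]unlock; congr (_ `^ _); apply: eq_integral => w _ /=.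
  by rewrite ger0_norm.
have E3 : 'N[P]_q%:E[EFin \o (fun w => ln (Y w))] <= lne 'E_P[Y] + ((p - 1)^-1)%:E.
  have Icst (a : R) : \int[P]_x (a%:E) = a%:E.
    by have := @expectation_cst _ _ _ P a; rewrite unlock.
  have EY1 : 1 <= 'E_P[Y].
    rewrite -(@expectation_cst _ _ _ P 1%R); apply: expectation_le => //.
    - by move=> w; apply: le_trans (hY w).
    - exact: aeW.
  have mlq : measurable_fun [set: T] (fun x => (`|ln (Y x)| `^ q)%R).
    apply: measurableT_comp (@measurable_realfun.measurable_powR R q) _.
    exact: measurableT_comp (@measurable_realfun.normr_measurable R _) mlnY.
  case EY : 'E_P[Y] EY1 => [r| |] //; last by move=> _; rewrite /= leey.
  rewrite lee_fin => r1.
  rewrite lne_EFin; last by lra.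
  rewrite -qk -EFinD.
  set L := (ln r + (q - 1))%R.
  have L0 : (0 < L)%R by rewrite /L; have := ln_ge0 r1; lra.
  set C := (q * L `^ (q - 1))%R.
  have C0 : (0 <= C)%R by rewrite /C mulr_ge0 ?powR_ge0 //; lra.
  have HI : \int[P]_x ((`|ln (Y x)| `^ q)%R%:E) <= (L `^ q)%:E.
    have h1 : \int[P]_x ((`|ln (Y x)| `^ q + C)%R%:E) = \int[P]_x ((`|ln (Y x)| `^ q)%R%:E) + C%:E.
      under eq_integral do rewrite EFinD.
      rewrite ge0_integralD //; last exact/measurable_realfun.measurable_EFinP.
      by rewrite Icst.
    have h2 : \int[P]_x ((L `^ q + (C / r) * Y x)%R%:E) = (L `^ q + C)%:E.
      under eq_integral do rewrite EFinD EFinM.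
      rewrite ge0_integralD //.
      - rewrite Icst.
        rewrite ge0_integralZl_EFin //.
        + rewrite -expectation_def EY -EFinM -EFinD divfK //; lra.
        + by move=> x _; rewrite lee_fin; apply: le_trans (hY x).
        + exact/measurable_realfun.measurable_EFinP.
        + by apply: divr_ge0 => //; lra.
      - by move=> x _; rewrite lee_fin powR_ge0.
      - move=> x _; rewrite lee_fin; apply: mulr_ge0; last by apply: le_trans (hY x).
        by apply: divr_ge0 => //; lra.
      - apply/measurable_realfun.measurable_EFinP; apply: measurable_realfun.measurable_funM => //.
    have h3 : \int[P]_x ((`|ln (Y x)| `^ q + C)%R%:E) <= \int[P]_x ((L `^ q + (C / r) * Y x)%R%:E).
      apply: ge0_le_integral => //.
      - by move=> x _; rewrite lee_fin addr_ge0 // powR_ge0.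
      - by apply/measurable_realfun.measurable_EFinP; apply: measurable_realfun.measurable_funD.
      - apply/measurable_realfun.measurable_EFinP; apply: measurable_realfun.measurable_funD => //; apply: measurable_realfun.measurable_funM => //.
      - by move=> x _; rewrite lee_fin; apply: pointwise.
    move: h3; rewrite h1 h2 EFinD leeD2rE //.
  rewrite unlock.
  have -> : \int[P]_x `|(EFin \o (fun w : T => ln (Y w))) x| `^ q = \int[P]_x ((`|ln (Y x)| `^ q)%R%:E).
    by apply: eq_integral => w _ /=.
  apply: le_trans.
    apply: (gt0_ler_poweR (r := q^-1) _ _ _ HI).
    - by rewrite invr_ge0; lra.
    - by rewrite in_itv /= leey andbT; apply: integral_ge0 => x _; rewrite lee_fin powR_ge0.
    - by rewrite in_itv /= lee_fin powR_ge0 leey.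
  by rewrite poweR_EFin -powRrM mulfV ?powRr1 //; [lra | apply: lt0r_neq0].
rewrite E1; apply: (le_trans H); rewrite E2.
apply: lee_wpmul2l => //; exact: poweR_ge0.
Qed.
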